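(* Let $R$ be a local ring and let $s=\sum_{i=1}^{\infty}s_ix^i\in R[[x]]$ be central in $R[[x]]$ with $s\in J\big(R[[x]]\big)$. Let $A(x)\in M_2\big(R[[x]];s\big)$. If $A(0)$ is similar in $M_2(R;s(0))$ to $\left[\begin{smallmatrix} u&1\\ v&w\end{smallmatrix}\right]$ (respectively, to $\left[\begin{smallmatrix} w&1\\ v&u\end{smallmatrix}\right]$) for some $u\in 1+J(R)$, $v\in U(R)$, $w\in J(R)$, then $A(x)$ is similar in $M_2\big(R[[x]];s\big)$ to $\left[\begin{smallmatrix} u(x)&1\\ v(x)&w(x)\end{smallmatrix}\right]$ (respectively, to $\left[\begin{smallmatrix} w(x)&1\\ v(x)&u(x)\end{smallmatrix}\right]$) for some $u(x)\in 1+J\big(R[[x]]\big)$, $v(x)\in U\big(R[[x]]\big)$, $w(x)\in J\big(R[[x]]\big)$ with $u(0)=u$, $v(0)=v$, $w(0)=w$.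
   Context: All rings are associative with identity. A ring $R$ is local if $R/J(R)$ is a division ring, where $J(R)$ is the Jacobson radical; $U(T)$ is the group of units of a ring $T$. $R[[x]]$ is the formal power series ring; for $f\in R[[x]]$, $f(0)$ is its constant term, and for a matrix $A(x)$ over $R[[x]]$, $A(0)$ is obtained by taking constant terms of all entries. For a ring $T$ and a central element $s\in T$, $M_2(T;s)$ denotes the ring whose elements are the $2\times 2$ arrays $\left[\begin{smallmatrix} a&b\\ c&d\end{smallmatrix}\right]$ with $a,b,c,d\in T$, with componentwise addition and multiplication $\left[\begin{smallmatrix} a&b\\ c&d\end{smallmatrix}\right]\left[\begin{smallmatrix} a'&b'\\ c'&d'\end{smallmatrix}\right]=\left[\begin{smallmatrix} aa'+s^2bc'&ab'+bd'\\ ca'+dc'&s^2cb'+dd'\end{smallmatrix}\right]$. Two elements $A,B\in M_2(T;s)$ are similar if $B=P^{-1}AP$ for some unit $P$ of $M_2(T;s)$. *)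

(* Defs.v *)
From HB Require Import structures.
From mathcomp Require Import all_boot all_order all_algebra.
From mathcomp Require Import boolp.
Set Implicit Arguments. Unset Strict Implicit. Unset Printing Implicit Defensive.
Import GRing.Theory.
Local Open Scope ring_scope.

Definition is_unit (T : nzRingType) (a : T) : Prop :=
  exists b : T, a * b = 1 /\ b * a = 1.

Definition left_ideal (T : nzRingType) (I : T -> Prop) : Prop :=
  [/\ I 0, (forall a b, I a -> I b -> I (a - b)) & (forall r a, I a -> I (r * a))].

Definition maximal_left_ideal (T : nzRingType) (M : T -> Prop) : Prop :=
  [/\ left_ideal M, ~ M 1 &
      forall K : T -> Prop, left_ideal K -> ~ K 1 ->
        (forall a, M a -> K a) -> forall a, K a -> M a].

Definition jacobson (T : nzRingType) (a : T) : Prop :=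
  forall M : T -> Prop, maximal_left_ideal M -> M a.

(* T is local iff T / J(T) is a division ring, written out on representatives:
   the quotient is nonzero (1 is not in J(T)) and every class not equal to 0
   (i.e. a \notin J(T)) has a two-sided inverse modulo J(T). *)
Definition local_ring (T : nzRingType) : Prop :=
  ~ jacobson (1 : T) /\
  forall a : T, ~ jacobson a ->
    exists b : T, jacobson (a * b - 1) /\ jacobson (b * a - 1).

Definition central (T : nzRingType) (s : T) : Prop :=
  forall t : T, s * t = t * s.

Record m2 (T : Type) := M2 { m11 : T; m12 : T; m21 : T; m22 : T }.

Definition m2mul (T : nzRingType) (s : T) (A B : m2 T) : m2 T :=
  M2 (m11 A * m11 B + s ^+ 2 * m12 A * m21 B)
     (m11 A * m12 B + m12 A * m22 B)
     (m21 A * m11 B + m22 A * m21 B)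
     (s ^+ 2 * m21 A * m12 B + m22 A * m22 B).

Definition m2one (T : nzRingType) : m2 T := M2 1 0 0 1.

Definition m2similar (T : nzRingType) (s : T) (A B : m2 T) : Prop :=
  exists P Q : m2 T,
    [/\ m2mul s P Q = m2one T, m2mul s Q P = m2one T &
        B = m2mul s (m2mul s Q A) P].

Definition m2map (T U : Type) (f : T -> U) (A : m2 T) : m2 U :=
  M2 (f (m11 A)) (f (m12 A)) (f (m21 A)) (f (m22 A)).

Record pser (R : Type) := Pser { coef : nat -> R }.

Section PowerSeries.
Variable R : nzRingType.

HB.instance Definition _ := gen_eqMixin (pser R).
HB.instance Definition _ := gen_choiceMixin (pser R).

Lemma pserP (f g : pser R) : (forall n, coef f n = coef g n) -> f = g.
Proof.
case: f g => f [g] /= H; congr Pser; exact: funext.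
Qed.

Definition ps0 : pser R := Pser (fun _ => 0).
Definition psopp (f : pser R) : pser R := Pser (fun n => - coef f n).
Definition psadd (f g : pser R) : pser R := Pser (fun n => coef f n + coef g n).

Lemma psaddA : associative psadd.
Proof. by move=> f g h; apply: pserP => n /=; rewrite addrA. Qed.
Lemma psaddC : commutative psadd.
Proof. by move=> f g; apply: pserP => n /=; rewrite addrC. Qed.
Lemma psadd0 : left_id ps0 psadd.
Proof. by move=> f; apply: pserP => n /=; rewrite add0r. Qed.
Lemma psaddN : left_inverse ps0 psopp psadd.
Proof. by move=> f; apply: pserP => n /=; rewrite addNr. Qed.

HB.instance Definition _ :=
  GRing.isZmodule.Build (pser R) psaddA psaddC psadd0 psaddN.

Definition psmul (f g : pser R) : pser R :=
  Pser (fun n => \sum_(i < n.+1) coef f i * coef g (n - i)).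
Definition ps1 : pser R := Pser (fun n => (n == 0)%:R).

Definition ptr (n : nat) (f : pser R) : {poly R} := \poly_(i < n.+1) coef f i.

Lemma ptr_coef n f k : (k <= n)%N -> (ptr n f)`_k = coef f k.
Proof. by move=> kn; rewrite coef_poly ltnS kn. Qed.

Lemma psmul_ptr n f g k : (k <= n)%N ->
  coef (psmul f g) k = (ptr n f * ptr n g)`_k.
Proof.
move=> kn; rewrite coefM /=; apply: eq_bigr => i _.
have ik : (i <= k)%N by rewrite -ltnS.
rewrite !ptr_coef //; first exact: leq_trans (leq_subr _ _) kn.
exact: leq_trans ik kn.
Qed.

Lemma psmulA : associative psmul.
Proof.
move=> f g h; apply: pserP => n.
rewrite (psmul_ptr _ _ (leqnn n)) [RHS](psmul_ptr _ _ (leqnn n)).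
have -> : (ptr n f * ptr n (psmul g h))`_n = (ptr n f * (ptr n g * ptr n h))`_n.
  rewrite [LHS]coefM [RHS]coefM; apply: eq_bigr => i _.
  by rewrite (ptr_coef _ (leq_subr _ _)) (psmul_ptr _ _ (leq_subr i n)).
have -> : (ptr n (psmul f g) * ptr n h)`_n = ((ptr n f * ptr n g) * ptr n h)`_n.
  rewrite [LHS]coefM [RHS]coefM; apply: eq_bigr => i _.
  have iN : (i <= n)%N by rewrite -ltnS.
  by rewrite (ptr_coef _ iN) (psmul_ptr _ _ iN).
by rewrite mulrA.
Qed.

Lemma psmul1 : left_id ps1 psmul.
Proof.
move=> f; apply: pserP => n /=; rewrite big_ord_recl /= mul1r subn0 big1 ?addr0 //.
by move=> i _; rewrite mul0r.
Qed.

Lemma psmulr1 : right_id ps1 psmul.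
Proof.
move=> f; apply: pserP => n /=; rewrite big_ord_recr /= subnn mulr1 big1 ?add0r //.
move=> i _; rewrite subn_eq0 leqNgt ltn_ord /=; exact: mulr0.
Qed.

Lemma psmulDl : left_distributive psmul psadd.
Proof.
move=> f g h; apply: pserP => n /=; rewrite -big_split /=.
by apply: eq_bigr => i _; rewrite mulrDl.
Qed.

Lemma psmulDr : right_distributive psmul psadd.
Proof.
move=> f g h; apply: pserP => n /=; rewrite -big_split /=.
by apply: eq_bigr => i _; rewrite mulrDr.
Qed.

Lemma ps1_neq0 : ps1 != 0.
Proof.
apply/eqP => /(congr1 (fun f => coef f 0)) /= /eqP; by rewrite oner_eq0.
Qed.

HB.instance Definition _ :=
  GRing.Zmodule_isNzRing.Build (pser R) psmulA psmul1 psmulr1 psmulDl psmulDr ps1_neq0.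

Definition const_term (f : pser R) : R := coef f 0.

End PowerSeries.

(* Main.v *)
Require Import Defs.
From HB Require Import structures.
From mathcomp Require Import all_boot all_order all_algebra.
Import GRing.Theory.
Local Open Scope ring_scope.
Set Implicit Arguments. Unset Strict Implicit.

Section Ps.
Variable R : nzRingType.
Implicit Types f g : pser R.

Lemma coef_mul f g n : coef (f * g) n = \sum_(i < n.+1) coef f i * coef g (n - i).
Proof. by []. Qed.
Lemma coef_add f g n : coef (f + g) n = coef f n + coef g n.
Proof. by []. Qed.
Lemma coef_opp f n : coef (- f) n = - coef f n.
Proof. by []. Qed.
Lemma coef1 n : coef (1 : pser R) n = (n == 0)%:R.
Proof. by []. Qed.
Lemma coef0 n : coef (0 : pser R) n = 0.
Proof. by []. Qed.

Lemma ct_mul f g : const_term (f * g) = const_term f * const_term g.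
Proof. by rewrite /const_term coef_mul big_ord1 subn0. Qed.
Lemma ct_add f g : const_term (f + g) = const_term f + const_term g.
Proof. by []. Qed.
Lemma ct_opp f : const_term (- f) = - const_term f.
Proof. by []. Qed.
Lemma ct_sub f g : const_term (f - g) = const_term f - const_term g.
Proof. by []. Qed.
Lemma ct1 : const_term (1 : pser R) = 1.
Proof. by []. Qed.
Lemma ct0 : const_term (0 : pser R) = 0.
Proof. by []. Qed.
Definition cst (r : R) : pser R := Pser (fun n => if n is 0 then r else 0).
Lemma ct_cst r : const_term (cst r) = r. Proof. by []. Qed.
Lemma cst_add a b : cst (a + b) = cst a + cst b.
Proof. by apply: pserP => -[|n] /=; rewrite ?addr0. Qed.
Lemma cst_opp a : cst (- a) = - cst a.
Proof. by apply: pserP => -[|n] /=; rewrite ?oppr0. Qed.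
Lemma cst0 : cst 0 = 0.
Proof. by apply: pserP => -[|n]. Qed.
Lemma cst1 : cst 1 = 1.
Proof. by apply: pserP => -[|n]. Qed.
Lemma cst_mul a b : cst (a * b) = cst a * cst b.
Proof.
apply: pserP => -[|n]; rewrite coef_mul.
  by rewrite big_ord1.
rewrite big_ord_recl /= mulr0 add0r big1 // => i _; by rewrite mul0r.
Qed.

Section RInv.
Variables (f : pser R) (b0 : R).
Hypothesis fb : const_term f * b0 = 1.
Fixpoint invs (n : nat) : seq R :=
  match n with
  | 0 => [:: b0]
  | n'.+1 => let l := invs n' in
      rcons l (- b0 * \sum_(i < n'.+1) coef f i.+1 * nth 0 l (n' - i))
  end.
Lemma size_invs n : size (invs n) = n.+1.
Proof. by elim: n => //= n IH; rewrite size_rcons IH. Qed.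
Lemma invs_pref k n m : (k <= n)%N -> (n <= m)%N -> nth 0 (invs n) k = nth 0 (invs m) k.
Proof.
move=> kn; elim: m => [|m IH]; first by rewrite leqn0 => /eqP->.
rewrite leq_eqVlt => /orP[/eqP->//|]; rewrite ltnS => nm.
by rewrite /= nth_rcons size_invs ltnS (leq_trans kn nm) IH.
Qed.
Definition rinv := Pser (fun n => nth 0 (invs n) n).
Lemma rinv_S n : coef rinv n.+1 = - b0 * \sum_(i < n.+1) coef f i.+1 * coef rinv (n - i).
Proof.
rewrite /= nth_rcons size_invs ltnn eqxx; congr (_ * _); apply: eq_bigr => i _.
by rewrite (invs_pref (leqnn _) (leq_subr i n)).
Qed.
Lemma rinvP : f * rinv = 1.
Proof.
apply: pserP => -[|n]; rewrite coef_mul coef1.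
  by rewrite big_ord1.
rewrite big_ord_recl subn0 (rinv_S n).
have -> : \sum_(i < n.+1) coef f (bump 0 i) * coef rinv (n.+1 - bump 0 i)
   = \sum_(i < n.+1) coef f i.+1 * coef rinv (n - i) by apply: eq_bigr.
have fb0 : coef f 0 * b0 = 1 := fb. rewrite mulrA mulrN fb0 mulN1r addNr. done.
Qed.
Lemma ct_rinv : const_term rinv = b0. Proof. by []. Qed.
End RInv.

Lemma unit_lift f : is_unit (const_term f) -> is_unit f.
Proof.
case=> b [h1 h2].
have gf : const_term (rinv f b) * const_term f = 1 by rewrite ct_rinv.
set g := rinv f b.
have fg : f * g = 1 := rinvP h1.
set k := rinv g (const_term f).
have gk : g * k = 1 := rinvP gf.
have fk : f = k by rewrite -[f]mulr1 -gk mulrA fg mul1r.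
by exists g; split=> //; rewrite fk.
Qed.
End Ps.
Section M2.
Variables (T : nzRingType) (s : T).
Hypothesis Hc : forall t, t * s ^+ 2 = s ^+ 2 * t.
Lemma m2mulA (A B C : m2 T) : m2mul s (m2mul s A B) C = m2mul s A (m2mul s B C).
Proof.
case: A B C => a1 a2 a3 a4 [b1 b2 b3 b4] [c1 c2 c3 c4]; rewrite /m2mul /=.
move: (s ^+ 2) Hc => c Hc'.
by congr M2; rewrite !(mulrDl, mulrDr, mulrA) ?Hc' ?mulrA addrACA.
Qed.
Lemma m2mul1 (A : m2 T) : m2mul s (m2one T) A = A.
Proof. by case: A => *; rewrite /m2mul /= !(mul1r, mulr0, mul0r, addr0, add0r). Qed.
Lemma m2mulr1 (A : m2 T) : m2mul s A (m2one T) = A.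
Proof. by case: A => *; rewrite /m2mul /= !(mulr1, mulr0, mul0r, addr0, add0r). Qed.

Lemma sim_trans (A B C : m2 T) : m2similar s A B -> m2similar s B C -> m2similar s A C.
Proof.
case=> P1 [Q1 [e1 e2 ->]] [P2 [Q2 [e3 e4 ->]]].
exists (m2mul s P1 P2), (m2mul s Q2 Q1); split.
- by rewrite m2mulA -(m2mulA P2) e3 m2mul1 e1.
- by rewrite m2mulA -(m2mulA Q1) e2 m2mul1 e4.
- by rewrite !m2mulA.
Qed.

Lemma inv_sides (P X Y : m2 T) : m2mul s P X = m2one T -> m2mul s Y P = m2one T ->
  m2mul s X P = m2one T.
Proof.
move=> hx hy.
have : Y = X by rewrite -[Y]m2mulr1 -hx -m2mulA hy m2mul1.
by move=> <-.
Qed.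
End M2.
From Stdlib Require Import Classical.
Section Jac.
Variable R : nzRingType.
Lemma jac_lift (f : pser R) : jacobson (const_term f) -> jacobson f.
Proof.
move=> Jf M [[M0 Msub Mmul] M1 Mmax].
apply: NNPP => nMf.
pose K := fun g : pser R => exists m t, M m /\ g = m + t * f.
have K1 : K 1.
  apply: NNPP => nK1; apply: nMf; apply: (Mmax K _ nK1 _ f).
  - split.
    + by exists 0, 0; split=> //; rewrite mul0r addr0.
    + move=> _ _ [m1 [t1 [h1 ->]]] [m2 [t2 [h2 ->]]].
      exists (m1 - m2), (t1 - t2); split; first exact: Msub.
      by rewrite opprD addrACA mulrBl.
    + move=> r _ [m [t [h ->]]]; exists (r * m), (r * t); split; first exact: Mmul.
      by rewrite mulrDr mulrA.
  - by move=> m hm; exists m, 0; rewrite mul0r addr0.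
  - by exists 0, 1; rewrite add0r mul1r.
case: K1 => m [t [Mm e1]].
pose N := fun r : R => exists g, M g /\ const_term g = r.
have Nsub : forall a b, N a -> N b -> N (a - b).
  move=> _ _ [g1 [h1 <-]] [g2 [h2 <-]]; exists (g1 - g2); split; first exact: Msub.
  by rewrite ct_sub.
have Nmul : forall r a, N a -> N (r * a).
  move=> r _ [g [h <-]]; exists (cst r * g); split; first exact: Mmul.
  by rewrite ct_mul ct_cst.
have N0 : N 0 by exists 0; split.
have N1 : ~ N 1.
  move=> [g [Mg cg]].
  have [h [gh hg]] : is_unit g by apply: unit_lift; rewrite cg; exists 1; rewrite mulr1.
  by apply: M1; rewrite -hg; apply: Mmul.
have NM : maximal_left_ideal N.
  split; [by split | exact: N1 | ].
  move=> K0 [K00 K0sub K0mul] nK01 NK a K0a.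
  pose K' := fun g : pser R => K0 (const_term g).
  have : M (cst a).
    apply: (Mmax K').
    - split; rewrite /K'.
      + by rewrite ct0.
      + by move=> x y hx hy; rewrite ct_sub; apply: K0sub.
      + by move=> x y hy; rewrite ct_mul; apply: K0mul.
    - by rewrite /K' ct1.
    - by move=> g Mg; apply: NK; exists g.
    - by rewrite /K' ct_cst.
  by move=> Ma; exists (cst a); split.
have := Jf N NM; case=> g [Mg cg].
apply: N1.
have -> : (1 : R) = const_term m - (0 - const_term t * const_term f).
  by rewrite sub0r opprK -ct_mul -ct_add -e1 ct1.
apply: (Nsub); first by exists m.
by apply: (Nsub) => //; apply: Nmul; exists g.
Qed.
End Jac.
Section Main.
Variable R : nzRingType.
Local Notation T := (pser R).
Variable s : T.
Hypothesis Hs0 : const_term s = 0.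
Hypothesis Hcent : central s.

Lemma Hc : forall t : T, t * s ^+ 2 = s ^+ 2 * t.
Proof. by move=> t; rewrite expr2 mulrA -Hcent -mulrA -Hcent mulrA. Qed.
Lemma Hc0 : forall t : R, t * 0 ^+ 2 = 0 ^+ 2 * t.
Proof. by move=> t; rewrite expr0n mulr0 mul0r. Qed.

Lemma cs2 : const_term (s ^+ 2) = 0 ^+ 2.
Proof. by rewrite expr2 ct_mul Hs0 expr2. Qed.

Lemma map_mul (X Y : m2 T) :
  m2map (@const_term R) (m2mul s X Y) =
  m2mul 0 (m2map (@const_term R) X) (m2map (@const_term R) Y).
Proof.
case: X Y => x1 x2 x3 x4 [y1 y2 y3 y4]; rewrite /m2map /m2mul.
by congr M2; rewrite !ct_add !ct_mul /= ?Hs0 ?expr2.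
Qed.

Lemma map_cst (X : m2 R) : m2map (@const_term R) (m2map (@cst R) X) = X.
Proof. by case: X. Qed.

Lemma m12_cst (X Y : m2 R) :
  m12 (m2mul s (m2map (@cst R) X) (m2map (@cst R) Y)) = cst (m12 (m2mul 0 X Y)).
Proof. by case: X Y => ? ? ? ? [? ? ? ?]; rewrite /= cst_add !cst_mul. Qed.
Lemma m21_cst (X Y : m2 R) :
  m21 (m2mul s (m2map (@cst R) X) (m2map (@cst R) Y)) = cst (m21 (m2mul 0 X Y)).
Proof. by case: X Y => ? ? ? ? [? ? ? ?]; rewrite /= cst_add !cst_mul. Qed.

Lemma unit_ct1 (e : T) : const_term e = 1 ->
  exists d, e * d = 1 /\ d * e = 1 /\ const_term d = 1.
Proof.
move=> h; have [d [h1 h2]] : is_unit e by apply: unit_lift; rewrite h; exists 1; rewrite mulr1.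
exists d; split=> //; split=> //.
by move: (congr1 (@const_term R) h1); rewrite ct_mul h mul1r ct1.
Qed.

Lemma diag_inv (E : m2 T) : m12 E = 0 -> m21 E = 0 ->
  const_term (m11 E) = 1 -> const_term (m22 E) = 1 ->
  exists D, [/\ m2mul s E D = m2one T, m2mul s D E = m2one T &
              m2map (@const_term R) D = m2one R].
Proof.
case: E => e1 e2 e3 e4 /= -> -> h1 h4.
have [d1 [a1 [b1 c1]]] := unit_ct1 h1.
have [d4 [a4 [b4 c4]]] := unit_ct1 h4.
exists (M2 d1 0 0 d4); split; rewrite /m2mul /m2map /m2one /=;
  by congr M2; rewrite ?(mulr0, mul0r, addr0, add0r) ?ct0.
Qed.

Lemma lift_sim (A : m2 T) (B0 : m2 R) :
  m2similar 0 (m2map (@const_term R) A) B0 ->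
  exists A1, m2similar s A A1 /\ m2map (@const_term R) A1 = B0.
Proof.
case=> P0 [Q0 [hPQ hQP ->]].
pose P := m2map (@cst R) P0; pose Q1 := m2map (@cst R) Q0.
have [D [ED DE mD]] : exists D, [/\ m2mul s (m2mul s P Q1) D = m2one T,
    m2mul s D (m2mul s P Q1) = m2one T & m2map (@const_term R) D = m2one R].
  apply: diag_inv; rewrite ?m12_cst ?m21_cst ?hPQ ?cst0 //.
  - by rewrite -[const_term _]/(m11 (m2map (@const_term R) _)) map_mul !map_cst hPQ.
  - by rewrite -[const_term _]/(m22 (m2map (@const_term R) _)) map_mul !map_cst hPQ.
have [D' [ED' DE' mD']] : exists D, [/\ m2mul s (m2mul s Q1 P) D = m2one T,
    m2mul s D (m2mul s Q1 P) = m2one T & m2map (@const_term R) D = m2one R].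
  apply: diag_inv; rewrite ?m12_cst ?m21_cst ?hQP ?cst0 //.
  - by rewrite -[const_term _]/(m11 (m2map (@const_term R) _)) map_mul !map_cst hQP.
  - by rewrite -[const_term _]/(m22 (m2map (@const_term R) _)) map_mul !map_cst hQP.
pose Q := m2mul s Q1 D.
have PQ : m2mul s P Q = m2one T by rewrite /Q -m2mulA ?ED //; exact: Hc.
have QP : m2mul s Q P = m2one T.
  apply: (inv_sides Hc PQ (Y := m2mul s D' Q1)).
  by rewrite m2mulA ?DE' //; exact: Hc.
exists (m2mul s (m2mul s Q A) P); split; first by exists P, Q; split.
rewrite (map_mul (m2mul s Q A) P) (map_mul Q A) /Q (map_mul Q1 D) mD /P /Q1 !map_cst m2mulr1 //; exact: Hc0.
Qed.

Lemma norm12 (A1 : m2 T) : const_term (m12 A1) = 1 ->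
  exists a b c, [/\ m2similar s A1 (M2 a 1 b c), const_term a = const_term (m11 A1),
     const_term b = const_term (m21 A1) & const_term c = const_term (m22 A1)].
Proof.
case: A1 => a1 a2 a3 a4 /= h.
have [d [hd1 [hd2 cd]]] := unit_ct1 h.
exists a1, (a2 * a3), (a2 * a4 * d); split.
- exists (M2 1 0 0 d), (M2 1 0 0 a2); split; rewrite /m2mul /m2one /=;
    by congr M2; rewrite ?(mulr0, mul0r, addr0, add0r, mul1r, mulr1).
- by [].
- by rewrite ct_mul h mul1r.
- by rewrite !ct_mul h cd mul1r mulr1.
Qed.
End Main.

Theorem lemma2p17 (R : nzRingType) (s : pser R) :
  local_ring R ->
  const_term s = 0 ->
  central s ->
  jacobson s ->
  forall A : m2 (pser R),
    (forall u v w : R,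
       jacobson (u - 1) -> is_unit v -> jacobson w ->
       m2similar (const_term s) (m2map (@const_term R) A) (M2 u 1 v w) ->
       exists ux vx wx : pser R,
         jacobson (ux - 1) /\ is_unit vx /\ jacobson wx /\
             const_term ux = u /\ const_term vx = v /\ const_term wx = w /\
             m2similar s A (M2 ux 1 vx wx)) /\
    (forall u v w : R,
       jacobson (u - 1) -> is_unit v -> jacobson w ->
       m2similar (const_term s) (m2map (@const_term R) A) (M2 w 1 v u) ->
       exists ux vx wx : pser R,
         jacobson (ux - 1) /\ is_unit vx /\ jacobson wx /\
             const_term ux = u /\ const_term vx = v /\ const_term wx = w /\
             m2similar s A (M2 wx 1 vx ux)).
Proof.
move=> _ Hs0 Hcent _ A.
have HC := Hc Hcent.
split=> u v w Ju Uv Jw; rewrite Hs0 => /(lift_sim Hs0 Hcent) [A1 [S1 HA1]].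
- have c12 : const_term (m12 A1) = 1.
    by rewrite -[const_term _]/(m12 (m2map (@const_term R) A1)) HA1.
  have [a [b [c [S2 ca cb cc]]]] := @norm12 R s A1 c12.
  move: ca cb cc; rewrite -[const_term (m11 A1)]/(m11 (m2map (@const_term R) A1))
    -[const_term (m21 A1)]/(m21 (m2map (@const_term R) A1))
    -[const_term (m22 A1)]/(m22 (m2map (@const_term R) A1)) HA1 /= => ca cb cc.
  exists a, b, c; do ![split=> //].
  + by apply: jac_lift; rewrite ct_sub ct1 ca.
  + by apply: unit_lift; rewrite cb.
  + by apply: jac_lift; rewrite cc.
  + exact: (sim_trans HC S1 S2).
- have c12 : const_term (m12 A1) = 1.
    by rewrite -[const_term _]/(m12 (m2map (@const_term R) A1)) HA1.
  have [a [b [c [S2 ca cb cc]]]] := @norm12 R s A1 c12.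
  move: ca cb cc; rewrite -[const_term (m11 A1)]/(m11 (m2map (@const_term R) A1))
    -[const_term (m21 A1)]/(m21 (m2map (@const_term R) A1))
    -[const_term (m22 A1)]/(m22 (m2map (@const_term R) A1)) HA1 /= => ca cb cc.
  exists c, b, a; do ![split=> //].
  + by apply: jac_lift; rewrite ct_sub ct1 cc.
  + by apply: unit_lift; rewrite cb.
  + by apply: jac_lift; rewrite ca.
  + exact: (sim_trans HC S1 S2).
Qed.
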